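(* Let $(G_k)_{k\in\mathbb Z}$ be a gibonacci sequence, let $\lambda = G_1^2 - G_0G_2$, and let $F_k$ denote the Fibonacci numbers. For every positive integer $n$ and all integers $t$ and $m$, \begin{equation*} \begin{split} &220\sum_{j = 1}^n G_{j + t - 1} G_{j + t} G_{j + t + 1} G_{j + t + 2} G_{j + t + m}\\ &\quad = \left(F_{m + 2} + F_{m - 3}\right)\Big(-\left(G_{n + t + 3}^5 - G_{t + 3}^5\right) + 7\left(G_{n + t + 2}^5 - G_{t + 2}^5\right) + 47\left(G_{n + t + 1}^5 - G_{t + 1}^5\right)\\ &\qquad\qquad + 31\left(G_{n + t}^5 - G_t^5\right) - 9\left(G_{n + t - 1}^5 - G_{t - 1}^5\right) - \left(G_{n + t - 2}^5 - G_{t - 2}^5\right)\Big)\\ &\qquad - 44\lambda^2\left(F_{m + 2} + F_{m - 3}\right)\left(G_{n + t + 2} - G_{t + 2}\right) - 44F_{m + 2}\left(G_{t + 1}^5 - \lambda^2 G_{t + 1}\right) + 44F_{m + 2}\left(G_{n + t + 1}^5 - \lambda^2 G_{n + t + 1}\right) \end{split} \end{equation*} and \begin{equation*} \begin{split} &220\sum_{j = 1}^n (-1)^{j - 1}G_{j + t - 1} G_{j + t} G_{j + t + 1} G_{j + t + 2} G_{j + t + m}\\ &\quad = -\left(F_{m + 2} - F_{m - 3}\right)\Big(-\left((-1)^{n + 1}G_{n + t + 3}^5 + G_{t + 3}^5\right) + 9\left((-1)^{n + 1}G_{n + t + 2}^5 + G_{t + 2}^5\right)\\ &\qquad\qquad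 + 31\left((-1)^{n + 1}G_{n + t + 1}^5 + G_{t + 1}^5\right) - 47\left((-1)^{n + 1}G_{n + t}^5 + G_t^5\right)\\ &\qquad\qquad + 7\left((-1)^{n + 1}G_{n + t - 1}^5 + G_{t - 1}^5\right) + \left((-1)^{n + 1}G_{n + t - 2}^5 + G_{t - 2}^5\right)\Big)\\ &\qquad + 44\lambda^2\left(F_{m + 2} - F_{m - 3}\right)\left((-1)^{n + 1}G_{n + t - 1} + G_{t - 1}\right) + 44F_{m + 2}\left(G_{t + 1}^5 - \lambda^2 G_{t + 1}\right)\\ &\qquad + 44F_{m + 2}(-1)^{n + 1}\left(G_{n + t + 1}^5 - \lambda^2 G_{n + t + 1}\right). \end{split} \end{equation*}
   Context: A gibonacci sequence $(G_k)_{k\in\mathbb Z}$ is defined by arbitrary initial values $G_0=a$, $G_1=b$ (numbers, not both zero) and $G_k=G_{k-1}+G_{k-2}$ for all integers $k$. The Fibonacci numbers $F_k$ are the gibonacci sequence with $F_0=0$, $F_1=1$, extended to all integer indices by the same recurrence (so $F_{-k}=(-1)^{k+1}F_k$). *)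

(* Defs.v *)
From mathcomp Require Import all_boot all_order all_algebra.
Set Implicit Arguments. Unset Strict Implicit. Unset Printing Implicit Defensive.
Import Order.TTheory GRing.Theory Num.Theory.
Local Open Scope ring_scope.

Fixpoint fibn (n : nat) : nat :=
  match n with
  | 0 => 0
  | 1 => 1
  | (k.+1 as m).+1 => fibn m + fibn k
  end%N.

(* Fibonacci numbers extended to all integers: F_{-k} = (-1)^(k+1) F_k.
   Negz n denotes -(n+1). *)
Definition fibz (k : int) : int :=
  match k with
  | Posz n => (fibn n)%:Z
  | Negz n => (-1) ^+ n.+2 * (fibn n.+1)%:Z
  end.

Definition gibonacci (R : pzRingType) (G : int -> R) : Prop :=
  (forall k : int, G k = G (k - 1) + G (k - 2)) /\ (G 0 != 0 \/ G 1 != 0).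

(* Main.v *)
Require Import Defs.
From mathcomp Require Import all_boot all_order all_algebra.
From mathcomp Require Import zify ring lra.
Import Order.TTheory GRing.Theory Num.Theory.
Local Open Scope ring_scope.
Lemma int_ind2 (P : int -> Prop) : P 0 -> (forall k, P k <-> P (k + 1)) -> forall k, P k.
Proof.
move=> P0 HS.
have Hp : forall p : nat, P p%:Z.
  elim=> [|p IH]; first exact: P0.
  have -> : (p.+1)%:Z = p%:Z + 1 by lia.
  exact: (proj1 (HS _) IH).
have Hn : forall p : nat, P (- p%:Z).
  elim=> [|p IH]; first exact: P0.
  apply: (proj2 (HS _)); have -> : - (p.+1)%:Z + 1 = - p%:Z by lia.
  done.
case=> p; first exact: Hp.
by rewrite NegzE; apply: Hn.
Qed.

Lemma rec_uniq (R : pzRingType) (f g : int -> R) :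
  (forall k, f (k + 2) = f (k + 1) + f k) ->
  (forall k, g (k + 2) = g (k + 1) + g k) ->
  f 0 = g 0 -> f 1 = g 1 -> forall k, f k = g k.
Proof.
move=> Hf Hg H0 H1.
suff: forall k, f k = g k /\ f (k + 1) = g (k + 1) by move=> H k; case: (H k).
apply: int_ind2; first by [].
move=> k; split.
  case=> A B; split=> //.
  have -> : k + 1 + 1 = k + 2 by ring.
  by rewrite Hf Hg A B.
case=> A B; split; last exact: A.
have e1 := Hf k; have e2 := Hg k.
have E : k + 2 = k + 1 + 1 by ring.
rewrite E in e1 e2.
have -> : f k = f (k + 1 + 1) - f (k + 1) by rewrite e1 addrAC subrr add0r.
have -> : g k = g (k + 1 + 1) - g (k + 1) by rewrite e2 addrAC subrr add0r.
by rewrite A B.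
Qed.

Lemma fibz_rec (k : int) : fibz (k + 2) = fibz (k + 1) + fibz k.
Proof.
case: k => p.
  have -> : Posz p + 2 = Posz p.+2 by lia.
  have -> : Posz p + 1 = Posz p.+1 by lia.
  by rewrite /= PoszD.
case: p => [|[|q]]; first by [].
  by [].
have -> : Negz q.+2 + 2 = Negz q by rewrite !NegzE; lia.
have -> : Negz q.+2 + 1 = Negz q.+1 by rewrite !NegzE; lia.
rewrite /fibz.
have -> : fibn q.+3 = (fibn q.+2 + fibn q.+1)%N by [].
rewrite !exprS PoszD; ring.
Qed.

Lemma Gm (R : comPzRingType) (G : int -> R) :
  (forall k, G k = G (k - 1) + G (k - 2)) ->
  forall k c, G (k + c) = (fibz c)%:~R * G (k + 1) + (fibz (c - 1))%:~R * G k.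
Proof.
move=> Grec k.
apply: (@rec_uniq R (fun c => G (k + c))
  (fun c => (fibz c)%:~R * G (k + 1) + (fibz (c - 1))%:~R * G k)).
- move=> c /=; rewrite Grec; congr (G _ + G _); ring.
- move=> c /=.
  have -> : c + 2 - 1 = c - 1 + 2 by ring.
  have -> : c + 1 - 1 = c - 1 + 1 by ring.
  have -> : c - 1 + 1 = c by ring.
  rewrite !fibz_rec !intrD.
  have -> : c - 1 + 1 = c by ring.
  ring.
- have -> : k + 0 = k by ring.
  have -> : fibz 0 = 0 by [].
  have -> : fibz (0 - 1) = 1 by [].
  ring.
- have -> : fibz 1 = 1 by [].
  have -> : fibz (1 - 1) = 0 by [].
  ring.
Qed.

Lemma lam_inv (R : comPzRingType) (G : int -> R) :
  (forall k, G k = G (k - 1) + G (k - 2)) ->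
  forall k, (G (k + 1) ^+ 2 - G k * G (k + 2)) ^+ 2 = (G 1 ^+ 2 - G 0 * G 2) ^+ 2.
Proof.
move=> Grec.
have G2 : forall k, G (k + 2) = G (k + 1) + G k.
  by move=> k; rewrite Grec; congr (G _ + G _); ring.
apply: int_ind2; first by rewrite add0r.
move=> k.
suff -> : (G (k + 1 + 1) ^+ 2 - G (k + 1) * G (k + 1 + 2)) ^+ 2
   = (G (k + 1) ^+ 2 - G k * G (k + 2)) ^+ 2 by [].
rewrite (G2 (k + 1)).
have -> : k + 1 + 1 = k + 2 by ring.
rewrite G2; ring.
Qed.

Theorem theorem1 (R : numFieldType) (G : int -> R) (n : nat) (t m : int) :
  gibonacci G -> (0 < n)%N ->
  let lam := G 1 ^+ 2 - G 0 * G 2 in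
  let F (k : int) : R := (fibz k)%:~R in
  (220 * \sum_(1 <= j < n.+1)
      G (j%:Z + t - 1) * G (j%:Z + t) * G (j%:Z + t + 1) * G (j%:Z + t + 2)
        * G (j%:Z + t + m)
   = (F (m + 2) + F (m - 3)) *
       (- (G (n%:Z + t + 3) ^+ 5 - G (t + 3) ^+ 5)
        + 7 * (G (n%:Z + t + 2) ^+ 5 - G (t + 2) ^+ 5)
        + 47 * (G (n%:Z + t + 1) ^+ 5 - G (t + 1) ^+ 5)
        + 31 * (G (n%:Z + t) ^+ 5 - G t ^+ 5)
        - 9 * (G (n%:Z + t - 1) ^+ 5 - G (t - 1) ^+ 5)
        - (G (n%:Z + t - 2) ^+ 5 - G (t - 2) ^+ 5))
     - 44 * lam ^+ 2 * (F (m + 2) + F (m - 3)) * (G (n%:Z + t + 2) - G (t + 2))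
     - 44 * F (m + 2) * (G (t + 1) ^+ 5 - lam ^+ 2 * G (t + 1))
     + 44 * F (m + 2) * (G (n%:Z + t + 1) ^+ 5 - lam ^+ 2 * G (n%:Z + t + 1)))
  /\
  (220 * \sum_(1 <= j < n.+1)
      (-1) ^+ j.-1 * G (j%:Z + t - 1) * G (j%:Z + t) * G (j%:Z + t + 1)
        * G (j%:Z + t + 2) * G (j%:Z + t + m)
   = - (F (m + 2) - F (m - 3)) *
       (- ((-1) ^+ n.+1 * G (n%:Z + t + 3) ^+ 5 + G (t + 3) ^+ 5)
        + 9 * ((-1) ^+ n.+1 * G (n%:Z + t + 2) ^+ 5 + G (t + 2) ^+ 5)
        + 31 * ((-1) ^+ n.+1 * G (n%:Z + t + 1) ^+ 5 + G (t + 1) ^+ 5)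
        - 47 * ((-1) ^+ n.+1 * G (n%:Z + t) ^+ 5 + G t ^+ 5)
        + 7 * ((-1) ^+ n.+1 * G (n%:Z + t - 1) ^+ 5 + G (t - 1) ^+ 5)
        + ((-1) ^+ n.+1 * G (n%:Z + t - 2) ^+ 5 + G (t - 2) ^+ 5))
     + 44 * lam ^+ 2 * (F (m + 2) - F (m - 3))
         * ((-1) ^+ n.+1 * G (n%:Z + t - 1) + G (t - 1))
     + 44 * F (m + 2) * (G (t + 1) ^+ 5 - lam ^+ 2 * G (t + 1))
     + 44 * F (m + 2) * (-1) ^+ n.+1
         * (G (n%:Z + t + 1) ^+ 5 - lam ^+ 2 * G (n%:Z + t + 1))).
Proof.
move=> [Grec _] _ lam F.
have L : forall k, lam ^+ 2 = (G (k + 1) ^+ 2 - G k * G (k + 2)) ^+ 2.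
  by move=> k; rewrite lam_inv.
have Fm2 : F (m + 2) = 2 * F m + F (m - 1).
  have h1 := fibz_rec m; have h2 := fibz_rec (m - 1).
  have e1 : m - 1 + 2 = m + 1 by ring.
  have e2 : m - 1 + 1 = m by ring.
  rewrite e1 e2 in h2.
  rewrite /F (_ : fibz (m + 2) = 2 * fibz m + fibz (m - 1)); last by lia.
  rewrite intrD intrM; done.
have Fm3 : F (m - 3) = 2 * F (m - 1) - F m.
  have h1 := fibz_rec (m - 3); have h2 := fibz_rec (m - 2).
  have e1 : m - 3 + 2 = m - 1 by ring.
  have e2 : m - 3 + 1 = m - 2 by ring.
  have e3 : m - 2 + 2 = m by ring.
  have e4 : m - 2 + 1 = m - 1 by ring.
  rewrite e1 e2 in h1; rewrite e3 e4 in h2.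
  rewrite /F (_ : fibz (m - 3) = 2 * fibz (m - 1) - fibz m); last by lia.
  rewrite intrB intrM; done.
have G2 : forall k, G (k + 2) = G (k + 1) + G k.
  by move=> k; rewrite {1}Grec; congr (G _ + G _); ring.
have Gm1 : forall k, G (k - 1) = G (k + 1) - G k.
  move=> k; rewrite (Grec (k + 1)) (_ : k + 1 - 1 = k); last by ring.
  rewrite (_ : k + 1 - 2 = k - 1); last by ring.
  ring.
have Gm2 : forall k, G (k - 2) = G k - G (k - 1).
  move=> k; rewrite (Grec k); ring.
have G3 : forall k, G (k + 3) = G (k + 2) + G (k + 1).
  by move=> k; rewrite {1}Grec; congr (G _ + G _); ring.
have G4 : forall k, G (k + 4) = G (k + 3) + G (k + 2).
  by move=> k; rewrite {1}Grec; congr (G _ + G _); ring.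
split; elim: n => [|n IH].
- rewrite big_geq // !add0r; ring.
- rewrite big_nat_recr //= mulrDr IH.
  set N := n%:Z + t.
  rewrite (_ : (n.+1)%:Z + t - 1 = N); last by rewrite /N; lia.
  rewrite (_ : (n.+1)%:Z + t - 2 = N - 1); last by rewrite /N; lia.
  rewrite (_ : (n.+1)%:Z + t + 1 = N + 2); last by rewrite /N; lia.
  rewrite (_ : (n.+1)%:Z + t + 2 = N + 3); last by rewrite /N; lia.
  rewrite (_ : (n.+1)%:Z + t + 3 = N + 4); last by rewrite /N; lia.
  rewrite (_ : (n.+1)%:Z + t + m = N + 1 + m); last by rewrite /N; lia.
  rewrite (_ : (n.+1)%:Z + t = N + 1); last by rewrite /N; lia.
  rewrite (@Gm _ _ Grec (N + 1) m) (_ : N + 1 + 1 = N + 2); last by ring.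
  rewrite (L N) Fm2 Fm3.
  rewrite !G4 !G3 !G2 !Gm2 !Gm1.
  ring.
- rewrite big_geq // !add0r expr1; ring.
- rewrite big_nat_recr //= mulrDr IH.
  set N := n%:Z + t.
  rewrite (_ : (n.+1)%:Z + t - 1 = N); last by rewrite /N; lia.
  rewrite (_ : (n.+1)%:Z + t - 2 = N - 1); last by rewrite /N; lia.
  rewrite (_ : (n.+1)%:Z + t + 1 = N + 2); last by rewrite /N; lia.
  rewrite (_ : (n.+1)%:Z + t + 2 = N + 3); last by rewrite /N; lia.
  rewrite (_ : (n.+1)%:Z + t + 3 = N + 4); last by rewrite /N; lia.
  rewrite (_ : (n.+1)%:Z + t + m = N + 1 + m); last by rewrite /N; lia.
  rewrite (_ : (n.+1)%:Z + t = N + 1); last by rewrite /N; lia.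
  rewrite (@Gm _ _ Grec (N + 1) m) (_ : N + 1 + 1 = N + 2); last by ring.
  rewrite (L N) Fm2 Fm3.
  rewrite !G4 !G3 !G2 !Gm2 !Gm1.
  rewrite !exprS.
  ring.
Qed.
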